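(* Let $\mathcal{M}$ be a finite $\mathcal{R}$-trivial monoid, let $E_1,\dots,E_p\in\mathbb{Z}\mathcal{M}$ be the complete system of primitive orthogonal idempotents produced by the algorithm described in the context, and let $R$ be a ring with $1\ne0$ having a complete system of primitive orthogonal idempotents $\epsilon_1,\dots,\epsilon_q\in R$. Let $\Theta:\mathbb{Z}\mathcal{M}\to R\mathcal{M}$ be the ring homomorphism $\Theta(\sum_\sigma r_\sigma\cdot\sigma)=\sum_\sigma\theta(r_\sigma)\cdot\sigma$, where $\theta:\mathbb{Z}\to R$ is the unique unital ring homomorphism, and set $\overline{E}_j:=\Theta(E_j)$. Then the elements $\epsilon_i\overline{E}_j$, $i=1,\dots,q$, $j=1,\dots,p$, form a complete system of primitive orthogonal idempotents of $R\mathcal{M}$.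
   Context: $\mathcal{M}$ is $\mathcal{R}$-trivial: $\sigma\mathcal{M}=\tau\mathcal{M}$ implies $\sigma=\tau$; unit $e$, $n=\#\mathcal{M}$. $R$ is an arbitrary (possibly noncommutative) ring with $1\ne0$; $R\mathcal{M}$ is the monoid algebra of formal sums $\sum_\mu r_\mu\cdot\mu$ with $(\sum_\sigma r_\sigma\cdot\sigma)(\sum_\tau s_\tau\cdot\tau)=\sum_\mu(\sum_{\sigma\tau=\mu}r_\sigma s_\tau)\cdot\mu$, and $r\in R$ identified with $r\cdot e$. A complete system of primitive orthogonal idempotents of a ring $A$ is a finite set of nonzero $E_1,\dots,E_p\in A$ with $E_i^2=E_i$, $E_iE_j=0$ for $i\ne j$, each $E_i$ primitive (if $E_i=X+Y$ with $X,Y\in A$, $X^2=X$, $Y^2=Y$, $XY=YX=0$ then $X=0$ or $Y=0$), and $\sum_iE_i=1_A$. The algorithm: fix a generating set $\mathcal{S}$ of $\mathcal{M}$; let $\mathcal{L}_\sigma:=\{\tau:\sigma\tau=\sigma\}$, $\mathcal{L}^{\mathcal{S}}_\sigma:=\mathcal{L}_\sigma\cap\mathcal{S}$; let $\sigma_1,\dots,\sigma_p$ represent the distinct sets $\mathcal{L}^{\mathcal{S}}_\sigma$ and $d_i:=\#\{\sigma:\mathcal{L}^{\mathcal{S}}_\sigma=\mathcal{L}^{\mathcal{S}}_{\sigma_i}\}$; set $T_i:=\prod_{\tau\in\mathcal{L}^{\mathcal{S}}_{\sigma_i}}\tau\prod_{\kappa\in\mathcal{S}\setminus\mathcal{L}^{\mathcal{S}}_{\sigma_i}}(e-\kappa)\in\mathbb{Z}\mathcal{M}$;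 with $\mathcal{P}_{a,b}(X):=e-(e-X^a)^b$, set $E_1:=\mathcal{P}_{a_1,b_1}(T_1)$ and recursively $Q_m:=T_m-\sum_{i<m}T_mE_i-\sum_{i<m}E_iT_m+\sum_{i,j<m}E_iT_mE_j$, $E_m:=\mathcal{P}_{a_m,b_m}(Q_m)$, where $a_m\ge n-d_m$ and $b_m\ge d_m$ are arbitrary nonnegative integers. *)

(* Defs.v *)
From HB Require Import structures.
From mathcomp Require Import all_boot all_order all_algebra.
Set Implicit Arguments.
Unset Strict Implicit.
Unset Printing Implicit Defensive.
Import GRing.Theory.
Local Open Scope ring_scope.

Definition primitive_idem (A : zmodType) (mul : A -> A -> A) (x : A) : Prop :=
  forall X Y : A, mul X X = X -> mul Y Y = Y -> mul X Y = 0 -> mul Y X = 0 ->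
    x = X + Y -> X = 0 \/ Y = 0.

Definition cspoi (A : zmodType) (mul : A -> A -> A) (one : A)
    (I : finType) (E : I -> A) : Prop :=
  [/\ (forall i, E i <> 0),
      (forall i, mul (E i) (E i) = E i),
      (forall i j, i <> j -> mul (E i) (E j) = 0),
      (forall i, primitive_idem mul (E i)) &
      \sum_(i : I) E i = one].

Definition R_trivial (T : finType) (mul : T -> T -> T) : Prop :=
  forall s t : T, [set mul s m | m : T] = [set mul t m | m : T] -> s = t.

Definition generates (T : finType) (mul : T -> T -> T) (e : T) (S : {set T}) :
  Prop := forall m : T, exists2 l : seq T, all (fun x => x \in S) l & m = foldr mul e l.

Definition Lset (T : finType) (mul : T -> T -> T) (s : T) : {set T} :=
  [set t | mul s t == s].
Definition LS (T : finType) (mul : T -> T -> T) (S : {set T}) (s : T) : {set T} :=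
  Lset mul s :&: S.

(* ---------- Monoid algebra R M: formal sums = finitely supported functions
   T -> R (T is finite), with convolution product. *)

Definition malg_mul (T : finType) (mul : T -> T -> T) {R : nzRingType}
    (f g : {ffun T -> R}) : {ffun T -> R} :=
  [ffun m => \sum_(s : T) \sum_(t : T | mul s t == m) f s * g t].

Definition malg_one (T : finType) (e : T) {R : nzRingType} : {ffun T -> R} :=
  [ffun m => (m == e)%:R].

Definition malg_scal (T : finType) (e : T) {R : nzRingType} (r : R) : {ffun T -> R} :=
  [ffun m => if m == e then r else 0].

Definition malg_of (T : finType) {R : nzRingType} (m : T) : {ffun T -> R} :=
  [ffun x => (x == m)%:R].

Fixpoint malg_pow (T : finType) (mul : T -> T -> T) (e : T) {R : nzRingType}
    (f : {ffun T -> R}) (n : nat) : {ffun T -> R} :=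
  match n with
  | 0 => @malg_one T e R
  | n'.+1 => malg_mul mul f (malg_pow mul e f n')
  end.

Definition malg_prod (T : finType) (mul : T -> T -> T) (e : T) {R : nzRingType}
    (s : seq {ffun T -> R}) : {ffun T -> R} :=
  foldr (malg_mul mul) (@malg_one T e R) s.

(* Theta : Z M -> R M, induced by the unique unital ring map Z -> R *)
Definition malg_cast (T : finType) (R : nzRingType) (f : {ffun T -> int}) :
  {ffun T -> R} := [ffun m => (f m)%:~R].

Definition Pab (T : finType) (mul : T -> T -> T) (e : T) (a b : nat)
    (X : {ffun T -> int}) : {ffun T -> int} :=
  @malg_one T e int - malg_pow mul e (@malg_one T e int - malg_pow mul e X a) b.

Definition Tterm (T : finType) (mul : T -> T -> T) (e : T) (lt lk : seq T) :
  {ffun T -> int} :=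
  malg_mul mul (malg_prod mul e [seq @malg_of T int t | t <- lt])
               (malg_prod mul e [seq @malg_one T e int - @malg_of T int k | k <- lk]).

(* Q_m built from T_m and the E_i, i < m (0-based indices) *)
Definition Qterm (T : finType) (mul : T -> T -> T) (p : nat)
    (Tm : {ffun T -> int}) (E : 'I_p -> {ffun T -> int}) (m : 'I_p) :
  {ffun T -> int} :=
  Tm - \sum_(i < p | (i < m)%N) malg_mul mul Tm (E i)
     - \sum_(i < p | (i < m)%N) malg_mul mul (E i) Tm
     + \sum_(i < p | (i < m)%N) \sum_(j < p | (j < m)%N)
          malg_mul mul (malg_mul mul (E i) Tm) (E j).

Definition dnum (T : finType) (mul : T -> T -> T) (S : {set T}) (s : T) : nat :=
  #|[set x : T | LS mul S x == LS mul S s]|.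

Definition representatives (T : finType) (mul : T -> T -> T) (S : {set T})
    (p : nat) (sig : 'I_p -> T) : Prop :=
  injective (fun i => LS mul S (sig i)) /\
  (forall s : T, exists i : 'I_p, LS mul S s = LS mul S (sig i)).

(* E is an output of the algorithm, for the generating set S, the
   representatives sig (in this order), some orderings of the factors of the
   products T_i, and some admissible a_m, b_m. *)
Definition algorithm_output (T : finType) (mul : T -> T -> T) (e : T)
    (S : {set T}) (p : nat) (sig : 'I_p -> T) (E : 'I_p -> {ffun T -> int}) :
  Prop :=
  exists (lt lk : 'I_p -> seq T) (a b : 'I_p -> nat),
  [/\ (forall i, perm_eq (lt i) (enum (LS mul S (sig i)))),
      (forall i, perm_eq (lk i) (enum (S :\: LS mul S (sig i)))),
      (forall m, (#|T| - dnum mul S (sig m) <= a m)%N),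
      (forall m, (dnum mul S (sig m) <= b m)%N) &
      (forall m, E m = Pab mul e (a m) (b m)
                         (Qterm mul (Tterm mul e (lt m) (lk m)) E m))].

(* Main.v *)
Require Import Defs.
From HB Require Import structures.
From mathcomp Require Import all_boot all_order all_algebra.
Set Implicit Arguments.
Unset Strict Implicit.
Unset Printing Implicit Defensive.
Import GRing.Theory.
Local Open Scope ring_scope.

Section MA.
Variables (T : finType) (mul : T -> T -> T) (e : T).
Hypotheses (Hassoc : associative mul) (He_l : left_id e mul) (He_r : right_id e mul).
Variable R : nzRingType.

Definition malg of associative mul & left_id e mul & right_id e mul : Type := {ffun T -> R}.
Local Notation MA := (malg Hassoc He_l He_r).
HB.instance Definition _ := GRing.Zmodule.copy MA {ffun T -> R}.

Lemma mulE (f g : {ffun T -> R}) m : malg_mul mul f g m =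
  \sum_s \sum_t (if mul s t == m then f s * g t else 0).
Proof. by rewrite ffunE; apply: eq_bigr => s _; rewrite big_mkcond. Qed.

Lemma sum_if (I : finType) (c : bool) (F : I -> R) :
  (if c then \sum_i F i else 0) = \sum_i (if c then F i else 0).
Proof. by case: c => //; rewrite big1. Qed.

Lemma sum_pick (F : T -> R) x : \sum_u (if x == u then F u else 0) = F x.
Proof.
rewrite (bigD1 x) //= eqxx big1 ?addr0 // => u /negPf hu.
by rewrite eq_sym hu.
Qed.

Lemma ex4 (F : T -> T -> T -> T -> R) :
  \sum_u \sum_w \sum_s \sum_t F u w s t = \sum_s \sum_t \sum_w \sum_u F u w s t.
Proof.
transitivity (\sum_w \sum_s \sum_t \sum_u F u w s t).
  rewrite [LHS]exchange_big; apply: eq_bigr => w _.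
  rewrite [LHS]exchange_big; apply: eq_bigr => s _.
  by rewrite [LHS]exchange_big.
rewrite [LHS]exchange_big; apply: eq_bigr => s _.
by rewrite [LHS]exchange_big.
Qed.

Lemma ex3 (F : T -> T -> T -> R) :
  \sum_v \sum_t \sum_w F v t w = \sum_t \sum_w \sum_v F v t w.
Proof.
rewrite [LHS]exchange_big; apply: eq_bigr => t _.
by rewrite [LHS]exchange_big.
Qed.

Lemma malg_mulA : associative (malg_mul mul : MA -> MA -> MA).
Proof.
move=> f g h; apply/ffunP => m; symmetry; rewrite !mulE.
transitivity (\sum_s \sum_t \sum_w
   (if mul (mul s t) w == m then f s * g t * h w else 0)).
  transitivity (\sum_u \sum_w \sum_s \sum_t
   (if (mul u w == m) && (mul s t == u) then f s * g t * h w else 0)).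
    apply: eq_bigr => u _; apply: eq_bigr => w _; rewrite mulE.
    rewrite mulr_suml sum_if; apply: eq_bigr => s _.
    rewrite mulr_suml sum_if; apply: eq_bigr => t _.
    by case: (mul u w == m); case: (mul s t == u); rewrite ?mul0r.
  rewrite ex4; apply: eq_bigr => s _; apply: eq_bigr => t _; apply: eq_bigr => w _.
  rewrite -(sum_pick (fun u => if mul u w == m then f s * g t * h w else 0) (mul s t)).
  by apply: eq_bigr => u _; case: (mul s t == u); rewrite ?andbF ?andbT.
apply: eq_bigr => s _.
transitivity (\sum_v \sum_t \sum_w
   (if (mul s v == m) && (mul t w == v) then f s * (g t * h w) else 0)).
  rewrite ex3; apply: eq_bigr => t _; apply: eq_bigr => w _.
  rewrite -Hassoc -mulrA.
  rewrite -(sum_pick (fun v => if mul s v == m then f s * (g t * h w) else 0) (mul t w)).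
  by apply: eq_bigr => v _; case: (mul t w == v); rewrite ?andbF ?andbT.
apply: eq_bigr => v _; symmetry; rewrite mulE mulr_sumr sum_if; apply: eq_bigr => t _.
rewrite mulr_sumr sum_if; apply: eq_bigr => w _.
by case: (mul s v == m); case: (mul t w == v); rewrite ?mulr0.
Qed.

Lemma malg_mul1l : left_id (malg_one e) (malg_mul mul : MA -> MA -> MA).
Proof.
move=> f; apply/ffunP => m; rewrite mulE (bigD1 e) //= [X in _ + X]big1 ?addr0.
  rewrite -(sum_pick f m); apply: eq_bigr => t _; rewrite He_l ffunE eqxx mul1r.
  by rewrite eq_sym.
move=> s /negPf hs; apply: big1 => t _; rewrite ffunE hs mul0r; by case: ifP.
Qed.

Lemma malg_mul1r : right_id (malg_one e) (malg_mul mul : MA -> MA -> MA).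
Proof.
move=> f; apply/ffunP => m; rewrite mulE -(sum_pick f m); apply: eq_bigr => s _.
rewrite (bigD1 e) //= big1 ?addr0.
  by rewrite He_r ffunE eqxx mulr1 eq_sym.
move=> t /negPf ht; rewrite ffunE ht mulr0; by case: ifP.
Qed.

Lemma malg_mulDl : left_distributive (malg_mul mul : MA -> MA -> MA) +%R.
Proof.
move=> f g h; apply/ffunP => m; rewrite [in RHS]ffunE !mulE -big_split; apply: eq_bigr => s _.
rewrite -big_split; apply: eq_bigr => t _; rewrite ffunE; case: ifP => _ /=; rewrite ?mulrDl ?addr0 //.
Qed.

Lemma malg_mulDr : right_distributive (malg_mul mul : MA -> MA -> MA) +%R.
Proof.
move=> f g h; apply/ffunP => m; rewrite [in RHS]ffunE !mulE -big_split; apply: eq_bigr => s _.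
rewrite -big_split; apply: eq_bigr => t _; rewrite ffunE; case: ifP => _ /=; rewrite ?mulrDr ?addr0 //.
Qed.

Lemma malg_one_neq0 : (malg_one e : MA) != 0.
Proof. by apply/eqP => /ffunP /(_ e); rewrite !ffunE eqxx; apply/eqP; exact: oner_neq0. Qed.

HB.instance Definition _ := GRing.Zmodule_isNzRing.Build MA
  malg_mulA malg_mul1l malg_mul1r malg_mulDl malg_mulDr malg_one_neq0.

Lemma malg_mulE (f g : MA) : f * g = malg_mul mul f g. Proof. by []. Qed.
Lemma malg_oneE : (1 : MA) = malg_one e. Proof. by []. Qed.


Definition chi (s : T) (f : MA) : R := \sum_(t | mul s t == s) f t.
Definition scal (r : R) : MA := malg_scal e r.
Definition dl (s : T) : MA := malg_of s.
Definition down (s : T) : {set T} := [set mul s m | m : T].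

Lemma chiD s f g : chi s (f + g) = chi s f + chi s g.
Proof. by rewrite /chi -big_split; apply: eq_bigr => t _; rewrite ffunE. Qed.
Lemma chi0 s : chi s 0 = 0.
Proof. by rewrite /chi big1 // => t _; rewrite ffunE. Qed.
Lemma chiN s f : chi s (- f) = - chi s f.
Proof. by rewrite /chi -sumrN; apply: eq_bigr => t _; rewrite ffunE. Qed.
Lemma chiB s f g : chi s (f - g) = chi s f - chi s g.
Proof. by rewrite chiD chiN. Qed.
Lemma chi_sum s (I : finType) (P : pred I) (F : I -> MA) :
  chi s (\sum_(i | P i) F i) = \sum_(i | P i) chi s (F i).
Proof. exact: (big_morph _ (chiD s) (chi0 s)). Qed.

Lemma scal_mulE r (f : MA) m : (scal r * f) m = r * f m.
Proof.
rewrite malg_mulE mulE (bigD1 e) //= [X in _ + X]big1 ?addr0.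
  rewrite -(sum_pick f m) mulr_sumr; apply: eq_bigr => t _.
  by rewrite He_l /scal ffunE eqxx eq_sym; case: ifP; rewrite ?mulr0.
by move=> u /negPf hu; apply: big1 => t _; rewrite /scal ffunE hu mul0r; case: ifP.
Qed.

Lemma mul_scalE r (f : MA) m : (f * scal r) m = f m * r.
Proof.
rewrite malg_mulE mulE -(sum_pick (fun t => f t * r) m); apply: eq_bigr => s _.
rewrite (bigD1 e) //= [X in _ + X]big1 ?addr0.
  by rewrite He_r /scal ffunE eqxx eq_sym; case: ifP.
by move=> u /negPf hu; rewrite /scal ffunE hu mulr0; case: ifP.
Qed.

Lemma scal1 : scal 1 = 1.
Proof. by apply/ffunP => m; rewrite !ffunE; case: (m == e). Qed.
Lemma scal0 : scal 0 = 0.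
Proof. by apply/ffunP => m; rewrite !ffunE; case: (m == e). Qed.
Lemma scalD r r' : scal (r + r') = scal r + scal r'.
Proof. by apply/ffunP => m; rewrite !ffunE; case: (m == e); rewrite ?addr0. Qed.
Lemma scalN r : scal (- r) = - scal r.
Proof. by apply/ffunP => m; rewrite !ffunE; case: (m == e); rewrite ?oppr0. Qed.
Lemma scalB r r' : scal (r - r') = scal r - scal r'.
Proof. by rewrite scalD scalN. Qed.
Lemma scalM r r' : scal (r * r') = scal r * scal r'.
Proof. by apply/ffunP => m; rewrite scal_mulE !ffunE; case: (m == e); rewrite ?mulr0. Qed.
Lemma scal_sum (I : finType) (P : pred I) (F : I -> R) :
  scal (\sum_(i | P i) F i) = \sum_(i | P i) scal (F i).
Proof. exact: (big_morph _ scalD scal0). Qed.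

Lemma chi_scal s r : chi s (scal r) = r.
Proof.
rewrite /chi (bigD1 e) ?He_r //= ffunE eqxx big1 ?addr0 // => t /andP [_ /negPf ht].
by rewrite ffunE ht.
Qed.
Lemma chi1 s : chi s 1 = 1.
Proof. by rewrite -scal1 chi_scal. Qed.
Lemma chi_dl s t : chi s (dl t) = (mul s t == s)%:R.
Proof.
rewrite /chi /dl; case h: (mul s t == s).
  rewrite (bigD1 t) //= ffunE eqxx big1 ?addr0 // => u /andP [_ /negPf hu].
  by rewrite ffunE hu.
by rewrite big1 // => u hu; rewrite ffunE; case: eqP => // eu; rewrite -eu hu in h.
Qed.

Lemma evalD (a b : MA) m : (a + b) m = a m + b m. Proof. by rewrite ffunE. Qed.
Lemma eval0 m : (0 : MA) m = 0. Proof. by rewrite ffunE. Qed.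
Lemma eval_sum (I : finType) (P : pred I) (F : I -> MA) m :
  (\sum_(i | P i) F i) m = \sum_(i | P i) F i m.
Proof. exact: (big_morph (fun g : MA => g m) (fun a b => evalD a b m) (eval0 m)). Qed.

Lemma dl_mul s (f : MA) : dl s * f = \sum_t scal (f t) * dl (mul s t).
Proof.
apply/ffunP => m; rewrite malg_mulE mulE (bigD1 s) //= [X in _ + X]big1 ?addr0.
  rewrite ffunE eval_sum.
  apply: eq_bigr => t _; rewrite scal_mulE /dl !ffunE eqxx mul1r.
  by rewrite eq_sym; case: (m == mul s t); rewrite ?mulr1 ?mulr0.
by move=> u /negPf hu; apply: big1 => t _; rewrite /dl ffunE hu mul0r; case: ifP.
Qed.

Lemma one_dl : (1 : MA) = dl e.
Proof. by apply/ffunP => m; rewrite !ffunE. Qed.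

Lemma dl_scal s r : dl s * scal r = scal r * dl s.
Proof.
apply/ffunP => m; rewrite scal_mulE dl_mul.
rewrite eval_sum.
rewrite (bigD1 e) //= [X in _ + X]big1 ?addr0.
  by rewrite scal_mulE He_r ffunE eqxx.
by move=> t /negPf ht; rewrite scal_mulE ffunE ht mul0r.
Qed.

Lemma step s (x W : MA) :
  (forall t, mul s t != s -> dl (mul s t) * W = 0) ->
  dl s * ((x - scal (chi s x)) * W) = 0.
Proof.
move=> H; rewrite mulrA mulrBr dl_mul dl_scal (bigID (fun t => mul s t == s)) /=.
rewrite [X in X + _ - _](_ : _ = scal (chi s x) * dl s).
  rewrite addrAC subrr add0r mulr_suml big1 // => t ht.
  by rewrite -mulrA H // mulr0.
rewrite /chi scal_sum mulr_suml; apply: eq_bigr => t /eqP ->; done.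
Qed.

Hypothesis HRtriv : R_trivial mul.

Lemma down_self s : s \in down s.
Proof. by apply/imsetP; exists e => //; rewrite He_r. Qed.

Lemma down_sub s t : down (mul s t) \subset down s.
Proof.
apply/subsetP => u /imsetP [m _ ->]; apply/imsetP; exists (mul t m) => //; by rewrite Hassoc.
Qed.

Lemma down_eq s t : s \in down (mul s t) -> mul s t = s.
Proof.
case/imsetP => m _ hm; apply: HRtriv; apply/eqP; rewrite eqEsubset down_sub /=.
apply/subsetP => u /imsetP [w _ ->]; apply/imsetP; exists (mul m w) => //.
by rewrite Hassoc -hm.
Qed.

Lemma Lkey s a b : (mul s (mul a b) == s) = (mul s a == s) && (mul s b == s).
Proof.
apply/idP/idP.
  move/eqP => h; have ha : mul s a = s.
    apply: down_eq; apply/imsetP; exists b => //; by rewrite -Hassoc h.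
  by rewrite ha eqxx /= -{1}ha -Hassoc h.
by case/andP => /eqP ha /eqP hb; rewrite Hassoc ha hb.
Qed.

Lemma chiM s f g : chi s (f * g) = chi s f * chi s g.
Proof.
rewrite /chi big_distrlr /=.
have -> : (\sum_(i | mul s i == s) \sum_(j | mul s j == s) f i * g j) =
   \sum_a \sum_b (if (mul s a == s) && (mul s b == s) then f a * g b else 0).
  rewrite [LHS]big_mkcond; apply: eq_bigr => a _; rewrite big_mkcond sum_if.
  by apply: eq_bigr => b _; case: (mul s a == s); case: (mul s b == s).
rewrite big_mkcond /=.
transitivity (\sum_m \sum_a \sum_b
   (if (mul s m == s) && (mul a b == m) then f a * g b else 0)).
  apply: eq_bigr => m _; rewrite malg_mulE mulE sum_if; apply: eq_bigr => a _.
  by rewrite sum_if; apply: eq_bigr => b _; case: (mul s m == s).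
rewrite exchange_big /=; apply: eq_bigr => a _.
rewrite exchange_big /=; apply: eq_bigr => b _.
rewrite -Lkey -(sum_pick (fun m => if mul s m == s then f a * g b else 0) (mul a b)).
apply: eq_bigr => m _; case: (mul a b == m); rewrite ?andbT ?andbF //.
Qed.

Lemma card_le (P : pred T) s t :
  (#|[set u in down (mul s t) | P u]| <= #|[set u in down s | P u]|)%N.
Proof.
apply: subset_leq_card; apply/subsetP => u; rewrite !inE => /andP [hu ->].
by rewrite andbT (subsetP (down_sub s t)).
Qed.

Lemma card_lt (P : pred T) s t k : mul s t != s -> P s ->
  (#|[set u in down s | P u]| <= k.+1)%N -> (#|[set u in down (mul s t) | P u]| <= k)%N.
Proof.
move=> hst hP hk; rewrite -ltnS; apply: leq_trans hk.
rewrite (cardsD1 s [set u in down s | P u]) inE down_self hP /= add1n ltnS.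
apply: subset_leq_card; apply/subsetP => u; rewrite !inE => /andP [hu ->].
rewrite andbT (subsetP (down_sub s t)) // andbT.
by apply/eqP => eu; move: hu; rewrite eu => /down_eq /eqP; rewrite (negPf hst).
Qed.

Lemma card_down_lt s t : mul s t != s -> (#|down (mul s t)| < #|down s|)%N.
Proof.
move=> hst; apply: proper_card; rewrite properE down_sub /=.
apply/subsetPn; exists s; first exact: down_self.
by apply/negP => /down_eq /eqP; rewrite (negPf hst).
Qed.

Lemma nilpot (x : MA) (c : T -> bool) : (forall t, chi t x = (c t)%:R) ->
  forall s i j, (#|[set t in down s | ~~ c t]| <= i)%N ->
  (#|[set t in down s | c t]| <= j)%N -> dl s * (x ^+ i * (1 - x) ^+ j) = 0.
Proof.
move=> Hc s; have [n] := ubnP #|down s|; elim: n s => // n IH s Hn i j Hi Hj.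
have IH' t W : (#|[set u in down (mul s t) | ~~ c u]| <= W.1)%N ->
    (#|[set u in down (mul s t) | c u]| <= W.2)%N -> mul s t != s ->
    dl (mul s t) * (x ^+ W.1 * (1 - x) ^+ W.2) = 0.
  move=> h1 h2 hst; apply: IH => //.
  by apply: leq_trans (card_down_lt hst) _; rewrite -ltnS.
case cs: (c s).
  case: j Hj => [|j] Hj.
    move: Hj; rewrite leqn0 cards_eq0 => /eqP /setP /(_ s).
    by rewrite !inE down_self cs.
  have -> : x ^+ i * (1 - x) ^+ j.+1 = - ((x - scal (chi s x)) * (x ^+ i * (1 - x) ^+ j)).
    have hc : x ^+ i * (1 - x) = (1 - x) * x ^+ i.
      by rewrite mulrBr mulrBl mulr1 mul1r -exprSr exprS.
    by rewrite Hc cs scal1 -mulNr opprB exprS [LHS]mulrA hc -[LHS]mulrA.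
  rewrite mulrN step ?oppr0 // => t hst.
  apply: (IH' t (i, j)) => //=; last by apply: card_lt Hj.
  by apply: leq_trans (card_le _ _ _) Hi.
case: i Hi => [|i] Hi.
  move: Hi; rewrite leqn0 cards_eq0 => /eqP /setP /(_ s).
  by rewrite !inE down_self cs.
have -> : x ^+ i.+1 * (1 - x) ^+ j = (x - scal (chi s x)) * (x ^+ i * (1 - x) ^+ j).
  by rewrite Hc cs scal0 subr0 exprS mulrA.
apply: step => t hst.
apply: (IH' t (i, j)) => //=; first by apply: card_lt Hi => //; rewrite cs.
by apply: leq_trans (card_le _ _ _) Hj.
Qed.

End MA.

Section RingLemmas.
Variable A : nzRingType.

Lemma Pidem (x : A) a b : x ^+ a * (1 - x) ^+ b = 0 ->
  (1 - (1 - x ^+ a) ^+ b) * (1 - (1 - x ^+ a) ^+ b) = 1 - (1 - x ^+ a) ^+ b.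
Proof.
move=> H; set v := 1 - x ^+ a; set h := \sum_(i < a) x ^+ i.
set s := \sum_(i < b) v ^+ i.
have cxh : GRing.comm x h by apply: commr_sum => i _; apply: commrX; exact: commr_refl.
have c1xh : GRing.comm (1 - x) h.
  by apply/commr_sym/commrB; [exact: commr1 | exact/commr_sym].
have hv : v = (1 - x) * h by rewrite /v /h -opprB subrX1 -mulNr opprB.
have hvb : v ^+ b = (1 - x) ^+ b * h ^+ b by rewrite hv exprMn_comm.
have h1v : 1 - v ^+ b = x ^+ a * s.
  rewrite -opprB subrX1 -mulNr opprB /v; congr (_ * _).
  by rewrite opprB addrC subrK.
have c1 : GRing.comm (h ^+ b) (x ^+ a).
  by apply/commrX/commr_sym/commrX/commr_sym.
have c2 : GRing.comm ((1 - x) ^+ b) (x ^+ a).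
  apply/commrX/commr_sym/commrX/commrB; [exact: commr1 | exact: commr_refl].
have -> : (1 - v ^+ b) * (1 - v ^+ b) = (1 - v ^+ b) - v ^+ b * (1 - v ^+ b).
  by rewrite mulrBl mul1r.
rewrite [X in _ - X](_ : _ = 0) ?subr0 //.
rewrite h1v hvb -mulrA [h ^+ b * _]mulrA c1 -[_ * h ^+ b * s]mulrA [(1 - x) ^+ b * _]mulrA c2 H.
by rewrite mul0r.
Qed.

Lemma Pann_l (y Q : A) a b : (0 < a)%N -> y * Q = 0 ->
  y * (1 - (1 - Q ^+ a) ^+ b) = 0.
Proof.
move=> ha hy; have hv : y * (1 - Q ^+ a) = y.
  by case: a ha => // a _; rewrite mulrBr mulr1 exprS mulrA hy mul0r subr0.
have : y * (1 - Q ^+ a) ^+ b = y.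
  by elim: b => [|b IH]; rewrite ?expr0 ?mulr1 // exprSr mulrA IH hv.
by rewrite mulrBr mulr1 => ->; rewrite subrr.
Qed.

Lemma Pann_r (y Q : A) a b : (0 < a)%N -> Q * y = 0 ->
  (1 - (1 - Q ^+ a) ^+ b) * y = 0.
Proof.
move=> ha hy; have hv : (1 - Q ^+ a) * y = y.
  by case: a ha => // a _; rewrite mulrBl mul1r exprSr -mulrA hy mulr0 subr0.
have : (1 - Q ^+ a) ^+ b * y = y.
  by elim: b => [|b IH]; rewrite ?expr0 ?mul1r // exprS -mulrA IH hv.
by rewrite mulrBl mul1r => ->; rewrite subrr.
Qed.

End RingLemmas.
Lemma idem_pow (A : nzRingType) (x : A) n : x * x = x -> x ^+ n.+1 = x.
Proof. by move=> h; elim: n => // n IH; rewrite exprS IH h. Qed.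

Section Alg.
Variables (T : finType) (mul : T -> T -> T) (e : T).
Hypotheses (Hassoc : associative mul) (He_l : left_id e mul) (He_r : right_id e mul).
Hypothesis HRtriv : R_trivial mul.

Lemma down_e : down mul e = setT.
Proof. by apply/setP => t; rewrite inE; apply/imsetP; exists t => //; rewrite He_l. Qed.

Lemma nilT (R : nzRingType) (x : malg R Hassoc He_l He_r) (c : T -> bool) i j :
  (forall t, chi t x = (c t)%:R) -> (#|T| - #|[set t | c t]| <= i)%N ->
  (#|[set t | c t]| <= j)%N -> x ^+ i * (1 - x) ^+ j = 0.
Proof.
move=> hc hi hj; rewrite -[LHS]mul1r {1}one_dl. refine (nilpot HRtriv hc _ _); rewrite down_e.
  apply: leq_trans hi; rewrite -(cardsC [set t | c t]) addKn.
  by apply: subset_leq_card; apply/subsetP => t; rewrite !inE.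
by apply: leq_trans hj; apply: subset_leq_card; apply/subsetP => t; rewrite !inE.
Qed.

Lemma chiX (R : nzRingType) s (x : malg R Hassoc He_l He_r) n : chi s (x ^+ n) = chi s x ^+ n.
Proof. by elim: n => [|n IH]; rewrite ?expr0 ?chi1 // !exprS chiM // IH. Qed.

Lemma malg_powE (R : nzRingType) (f : malg R Hassoc He_l He_r) n :
  malg_pow mul e f n = f ^+ n.
Proof. by elim: n => // n IH; rewrite exprS /= IH. Qed.

Lemma malg_prodE (R : nzRingType) (s : seq (malg R Hassoc He_l He_r)) :
  malg_prod mul e s = \prod_(x <- s) x.
Proof. by elim: s => [|x s IH]; rewrite ?big_nil ?big_cons //= IH. Qed.

Lemma chi_prod (R : nzRingType) s (l : seq (malg R Hassoc He_l He_r)) :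
  chi s (\prod_(x <- l) x) = \prod_(x <- l) chi s x.
Proof. by elim: l => [|x l IH]; rewrite ?big_nil ?big_cons ?chi1 // chiM // IH. Qed.

Lemma Lgen (S : {set T}) (HS : generates mul e S) s s' :
  LS mul S s = LS mul S s' -> forall t, (mul s t == s) = (mul s' t == s').
Proof.
move=> hL t; have [l hl ->] := HS t; elim: l hl => [|x l IH] /=.
  by rewrite !He_r !eqxx.
case/andP => hx hl; rewrite !(Lkey Hassoc HRtriv) IH //.
have: (x \in LS mul S s) = (x \in LS mul S s') by rewrite hL.
by rewrite !inE hx !andbT => ->.
Qed.

Lemma chi_LS (R : nzRingType) (S : {set T}) (HS : generates mul e S) s s'
  (f : malg R Hassoc He_l He_r) : LS mul S s = LS mul S s' -> chi s f = chi s' f.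
Proof. by move=> hL; apply: eq_bigl => t; rewrite (Lgen HS hL). Qed.

Variables (S : {set T}) (HS : generates mul e S) (p : nat) (sig : 'I_p -> T).
Hypothesis Hsig : representatives mul S sig.
Variable E : 'I_p -> {ffun T -> int}.
Variables (lt lk : 'I_p -> seq T) (a b : 'I_p -> nat).
Hypotheses (Hlt : forall i, perm_eq (lt i) (enum (LS mul S (sig i))))
  (Hlk : forall i, perm_eq (lk i) (enum (S :\: LS mul S (sig i))))
  (Ha : forall m, (#|T| - dnum mul S (sig m) <= a m)%N)
  (Hb : forall m, (dnum mul S (sig m) <= b m)%N)
  (HEd : forall m, E m = Pab mul e (a m) (b m)
                         (Qterm mul (Tterm mul e (lt m) (lk m)) E m)).

Local Notation Z := (malg int Hassoc He_l He_r).
Definition cls t (i : 'I_p) := LS mul S t == LS mul S (sig i).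
Definition EZ (i : 'I_p) : Z := E i.
Definition TZ (i : 'I_p) : Z := Tterm mul e (lt i) (lk i).

Lemma prod_bool (l : seq T) (f : T -> bool) :
  \prod_(t <- l) ((f t)%:R : int) = (all f l)%:R.
Proof.
by elim: l => [|x l IH]; rewrite ?big_nil ?big_cons //= IH; case: (f x); case: (all f l).
Qed.

Lemma chiT t m : chi t (TZ m) = (cls t m)%:R.
Proof.
rewrite /TZ /Tterm.
change (malg_mul mul ?x ?y) with ((x : Z) * y).
rewrite !malg_prodE chiM // !chi_prod !big_map.
under eq_bigr do rewrite chi_dl.
under [X in _ * X]eq_bigr do rewrite chiB chi1 chi_dl.
rewrite prod_bool.
rewrite (_ : \prod_(i <- lk m) (1 - (mul t i == t)%:R) = \prod_(i <- lk m) ((mul t i != t)%:R : int)); last first.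
  by apply: eq_bigr => k _; case: (mul t k == t).
rewrite prod_bool -natrM mulnb.
congr (nat_of_bool _)%:R.
rewrite (perm_all _ (Hlt m)) (perm_all _ (Hlk m)) /cls.
apply/andP/eqP.
  case=> /allP h1 /allP h2; apply/setP => x; rewrite !inE.
  case xS: (x \in S); rewrite ?andbF ?andbT //.
  case hx: (mul (sig m) x == sig m).
    by apply: h1; rewrite mem_enum !inE hx xS.
  apply/negbTE/h2; rewrite mem_enum !inE xS andbT.
  by rewrite hx.
move=> hL; split; apply/allP => x; rewrite mem_enum.
  by rewrite -hL !inE => /andP [].
rewrite in_setD -hL !inE => /andP [h xS]; move: h; by rewrite xS andbT.
Qed.

Definition Fs (m : 'I_p) : Z := \sum_(i < p | (i < m)%N) EZ i.

Lemma ABCD (V : zmodType) (x y z w : V) : x - y - (w - z) = x - w - y + z.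
Proof. by rewrite opprB addrA addrAC [x - y - w]addrAC. Qed.

Lemma Qform m : (Qterm mul (Tterm mul e (lt m) (lk m)) E m : Z) =
  (1 - Fs m) * TZ m * (1 - Fs m).
Proof.
rewrite mulrBr mulr1 !mulrBl !mul1r ABCD /Fs mulr_suml mulr_sumr mulr_suml.
by under [X in _ + X]eq_bigr do rewrite mulr_sumr.
Qed.

Lemma cls_sig (i m : 'I_p) : cls (sig i) m = (i == m).
Proof.
apply/eqP/eqP => [h|->] //; exact: Hsig.1.
Qed.

Lemma cls_uniq t (i m : 'I_p) : cls t i -> cls t m -> i = m.
Proof. by rewrite /cls => /eqP -> /eqP h; apply: Hsig.1. Qed.

Lemma dnumE m : dnum mul S (sig m) = #|[set t | cls t m]|.
Proof. by []. Qed.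

Lemma dnum_gt0 m : (0 < dnum mul S (sig m))%N.
Proof. by rewrite dnumE card_gt0; apply/set0Pn; exists (sig m); rewrite inE /cls. Qed.

Lemma a_gt0 t m : ~~ cls t m -> (0 < a m)%N.
Proof.
move=> ht; apply: leq_trans (Ha m); rewrite subn_gt0 dnumE.
rewrite -(cardsC [set t | cls t m]) -{1}[#|[set t | cls t m]|]addn0 ltn_add2l card_gt0.
by apply/set0Pn; exists t; rewrite !inE.
Qed.

Lemma chiP t (x : Z) A B : chi t (1 - (1 - x ^+ A) ^+ B) = 1 - (1 - chi t x ^+ A) ^+ B.
Proof. by rewrite chiB chi1 chiX // chiB chi1 chiX. Qed.

Lemma EZdef m : EZ m = 1 - (1 - (Qterm mul (Tterm mul e (lt m) (lk m)) E m : Z) ^+ a m) ^+ b m.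
Proof. by rewrite /EZ HEd /Pab !malg_powE. Qed.

Definition props (m : 'I_p) :=
  [/\ forall t, chi t (EZ m) = (cls t m)%:R, EZ m * EZ m = EZ m &
      forall i : 'I_p, (i < m)%N -> EZ i * EZ m = 0 /\ EZ m * EZ i = 0].

Lemma all_props m : props m.
Proof.
suff H : forall k (m : 'I_p), (m < k)%N -> props m by apply: (H m.+1).
elim=> [//|k IH] {}m hm.
have IHm (i : 'I_p) : (i < m)%N -> props i.
  by move=> hi; apply: IH; apply: leq_trans hi _.
have orth (i j : 'I_p) : (i < m)%N -> (j < m)%N -> i != j -> EZ i * EZ j = 0.
  move=> hi hj hij; case: (ltngtP i j) => [hlt|hlt|/val_inj hq].
  - by have [_ _ /(_ i hlt) []] := IHm j hj.
  - by have [_ _ /(_ j hlt) []] := IHm i hi.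
  - by rewrite hq eqxx in hij.
have hEF (i : 'I_p) : (i < m)%N -> EZ i * Fs m = EZ i.
  move=> hi; rewrite /Fs mulr_sumr (bigD1 i) //= [X in _ + X]big1 ?addr0.
    by have [] := IHm i hi.
  by move=> j /andP [hj hji]; apply: orth; rewrite // eq_sym.
have hFE (i : 'I_p) : (i < m)%N -> Fs m * EZ i = EZ i.
  move=> hi; rewrite /Fs mulr_suml (bigD1 i) //= [X in _ + X]big1 ?addr0.
    by have [] := IHm i hi.
  by move=> j /andP [hj hji]; apply: orth.
set Q : Z := Qterm mul (Tterm mul e (lt m) (lk m)) E m.
have hQ : Q = (1 - Fs m) * TZ m * (1 - Fs m) by rewrite /Q Qform.
have hEQ (i : 'I_p) : (i < m)%N -> EZ i * Q = 0.
  by move=> hi; rewrite hQ [EZ i * _]mulrA [EZ i * _]mulrA [EZ i * (1 - _)]mulrBr mulr1 hEF // subrr !mul0r.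
have hQE (i : 'I_p) : (i < m)%N -> Q * EZ i = 0.
  by move=> hi; rewrite hQ -!mulrA [(1 - _) * EZ i]mulrBl mul1r hFE // subrr !mulr0.
have chiQ t : chi t Q = (cls t m)%:R.
  rewrite hQ (chiM HRtriv) (chiM HRtriv) chiB chi1 chiT /Fs chi_sum.
  case ht: (cls t m); last by rewrite mulr0 mul0r.
  rewrite big1 ?subr0 ?mul1r //= => i hi.
  have [-> _ _] := IHm i hi; case hti: (cls t i) => //.
  by move: hi; rewrite (cls_uniq hti ht) ltnn.
have EQ : EZ m = 1 - (1 - Q ^+ a m) ^+ b m by rewrite EZdef.
split.
- move=> t; rewrite EQ chiP chiQ; case ht: (cls t m).
    rewrite expr1n subrr expr0n; move: (leq_trans (dnum_gt0 m) (Hb m)).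
    by case: (b m).
  have := a_gt0 (negbT ht); rewrite lt0n => /negbTE h0.
  by rewrite expr0n h0 subr0 expr1n subrr.
- rewrite EQ; apply: Pidem; apply: (nilT (c := cls^~ m)) => //; rewrite -dnumE //.
- move=> i hi; have ha : (0 < a m)%N.
    by apply: (a_gt0 (t := sig i)); rewrite cls_sig; apply/eqP => h; rewrite h ltnn in hi.
  by rewrite EQ; split; [apply: Pann_l; rewrite ?hEQ | apply: Pann_r; rewrite ?hQE].
Qed.

Lemma EZ_chi t m : chi t (EZ m) = (cls t m)%:R.
Proof. by have [] := all_props m. Qed.
Lemma EZ_idem m : EZ m * EZ m = EZ m.
Proof. by have [] := all_props m. Qed.
Lemma EZ_orth i j : i != j -> EZ i * EZ j = 0.
Proof.
move=> hij; case: (ltngtP i j) => [hlt|hlt|/val_inj hq].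
- by have [_ _ /(_ i hlt) []] := all_props j.
- by have [_ _ /(_ j hlt) []] := all_props i.
- by rewrite hq eqxx in hij.
Qed.

Lemma cls_one t : \sum_(i < p) ((cls t i)%:R : int) = 1.
Proof.
have [i0 hi0] := Hsig.2 t; have h0 : cls t i0 by apply/eqP.
rewrite (bigD1 i0) //= h0 big1 ?addr0 // => j hj.
case hc: (cls t j) => //; by rewrite (cls_uniq hc h0) eqxx in hj.
Qed.

Lemma T_gt0 : (0 < #|T|)%N.
Proof. by apply/card_gt0P; exists e. Qed.

Lemma zero_idem (R : nzRingType) (x : malg R Hassoc He_l He_r) :
  x * x = x -> (forall t, chi t x = 0) -> x = 0.
Proof.
move=> hx hc; rewrite -(idem_pow #|T|.-1 hx) (prednK T_gt0) -[_ ^+ _]mulr1.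
rewrite -(expr0 (1 - x)); apply: (nilT (c := fun _ => false)); [by move=> t; rewrite hc | by rewrite leq_subr | ].
by rewrite leqn0 cards_eq0; apply/eqP/setP => t; rewrite !inE.
Qed.

Lemma EZ_sum : \sum_i EZ i = 1.
Proof.
set s := \sum_i EZ i.
have hs : s * s = s.
  rewrite {1}/s mulr_suml; apply: eq_bigr => i _.
  rewrite /s mulr_sumr (bigD1 i) //= EZ_idem big1 ?addr0 // => j hj.
  by apply: EZ_orth; rewrite eq_sym.
have : 1 - s = 0.
  apply: zero_idem.
    by rewrite mulrBl mul1r mulrBr mulr1 hs subrr subr0.
  by move=> t; rewrite chiB chi1 /s chi_sum; under eq_bigr do rewrite EZ_chi; rewrite cls_one subrr.
by move/subr0_eq.
Qed.

Variable R : nzRingType.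
Local Notation MR := (malg R Hassoc He_l He_r).
Definition EB (i : 'I_p) : MR := malg_cast R (E i).

Lemma castM (f g : Z) : (malg_cast R (f * g) : MR) = (malg_cast R f : MR) * (malg_cast R g : MR).
Proof.
apply/ffunP => m; rewrite [in LHS]ffunE (malg_mulE f g) mulE rmorph_sum malg_mulE mulE; apply: eq_bigr => s _.
rewrite rmorph_sum; apply: eq_bigr => t _; rewrite !ffunE.
by case: (mul s t == m); [exact: intrM | exact: rmorph0].
Qed.
Lemma cast_sum (I : finType) (P : pred I) (F : I -> Z) :
  (malg_cast R (\sum_(i | P i) F i) : MR) = \sum_(i | P i) malg_cast R (F i).
Proof.
apply/ffunP => m; rewrite [in LHS]ffunE !sum_ffunE rmorph_sum; apply: eq_bigr => i _.
by rewrite ffunE.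
Qed.
Lemma cast1 : (malg_cast R (1 : Z) : MR) = 1.
Proof. by apply/ffunP => m; rewrite !ffunE; case: (m == e). Qed.
Lemma chi_cast t (f : Z) : chi t (malg_cast R f : MR) = (chi t f)%:~R.
Proof. by rewrite /chi rmorph_sum; apply: eq_bigr => s _; rewrite ffunE. Qed.

Lemma EB_chi t m : chi t (EB m) = (cls t m)%:R.
Proof. by rewrite chi_cast -/(EZ m) EZ_chi; case: (cls t m). Qed.
Lemma EB_idem m : EB m * EB m = EB m.
Proof. by rewrite /EB -castM -/(EZ m) EZ_idem. Qed.
Lemma EB_orth i j : i != j -> EB i * EB j = 0.
Proof.
move=> h; rewrite /EB -castM -/(EZ i) -/(EZ j) EZ_orth //.
by apply/ffunP => m; rewrite !ffunE.
Qed.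
Lemma EB_sum : \sum_i EB i = 1.
Proof. by rewrite /EB -cast_sum -cast1 -EZ_sum. Qed.
Lemma EB_scal m r : EB m * scal Hassoc He_l He_r r = scal Hassoc He_l He_r r * EB m.
Proof.
by apply/ffunP => x; rewrite mul_scalE scal_mulE /EB ffunE; apply/esym/commr_int.
Qed.

Lemma final (q : nat) (eps : 'I_q -> R) (Heps : cspoi ( *%R ) (1 : R) eps) :
  cspoi (malg_mul mul) (@malg_one T e R)
    (fun ij : 'I_q * 'I_p =>
       malg_mul mul (malg_scal e (eps ij.1)) (malg_cast R (E ij.2))).
Proof.
case: Heps => [He0 Heid Heo Hep Hes].
have PE (ij : 'I_q * 'I_p) : malg_mul mul (malg_scal e (eps ij.1)) (malg_cast R (E ij.2))
   = (scal Hassoc He_l He_r (eps ij.1) * EB ij.2 : MR) by [].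
have chiP t (ij : 'I_q * 'I_p) : chi t (scal Hassoc He_l He_r (eps ij.1) * EB ij.2 : MR) =
   eps ij.1 * (cls t ij.2)%:R.
  by rewrite chiM // chi_scal EB_chi.
have idP (ij : 'I_q * 'I_p) : (scal Hassoc He_l He_r (eps ij.1) * EB ij.2 : MR) *
   (scal Hassoc He_l He_r (eps ij.1) * EB ij.2) = scal Hassoc He_l He_r (eps ij.1) * EB ij.2.
  by rewrite mulrA -[_ * EB _ * _]mulrA EB_scal mulrA -scalM Heid -mulrA EB_idem.
split.
- move=> ij; rewrite PE => /(congr1 (chi (sig ij.2))).
  by rewrite chiP chi0 cls_sig eqxx mulr1; apply: He0.
- by move=> ij; rewrite PE; apply: idP.
- move=> [i j] [k l] hne /=.
  change ((scal Hassoc He_l He_r (eps i) * EB j : MR) * (scal Hassoc He_l He_r (eps k) * EB l) = 0).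
  rewrite mulrA -[_ * EB _ * _]mulrA EB_scal mulrA -scalM -mulrA.
  case: (eqVneq i k) => [eik|nik].
    have njl : j != l by apply/eqP => ejl; apply: hne; rewrite eik ejl.
    by rewrite EB_orth // mulr0.
  by rewrite Heo ?scal0 ?mul0r //; apply/eqP.
- move=> ij X Y hX hY hXY hYX; rewrite PE => hP.
  have hX' : (X : MR) * X = X := hX.
  have hY' : (Y : MR) * Y = Y := hY.
  have hXY' : (X : MR) * Y = 0 := hXY.
  have hYX' : (Y : MR) * X = 0 := hYX.
  have hP' : (scal Hassoc He_l He_r (eps ij.1) * EB ij.2 : MR) = (X : MR) + (Y : MR) := hP.
  have key (Z0 : MR) : Z0 * Z0 = Z0 ->
      Z0 * (scal Hassoc He_l He_r (eps ij.1) * EB ij.2) = Z0 ->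
      chi (sig ij.2) Z0 = 0 -> Z0 = 0.
    move=> hZ hZP hc; apply: zero_idem => // t.
    rewrite -hZP chiM // chiP; case ht: (cls t ij.2); last by rewrite mulr0 mulr0.
    by rewrite (chi_LS HS (s' := sig ij.2)) ?hc ?mul0r //; apply/eqP.
  have hPX : (X : MR) * (scal Hassoc He_l He_r (eps ij.1) * EB ij.2) = X.
    by rewrite hP' mulrDr hX' hXY' addr0.
  have hPY : (Y : MR) * (scal Hassoc He_l He_r (eps ij.1) * EB ij.2) = Y.
    by rewrite hP' mulrDr hY' hYX' add0r.
  have := Hep ij.1 (chi (sig ij.2) (X : MR)) (chi (sig ij.2) (Y : MR)).
  rewrite -!chiM // hX' hY' hXY' hYX' chi0.
  move=> /(_ erefl erefl erefl erefl) [].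
    by rewrite -chiD -hP' chiP cls_sig eqxx mulr1.
  + by move=> h; left; apply: key.
  + by move=> h; right; apply: key.
- rewrite -(pair_bigA _ (fun i j => malg_mul mul (malg_scal e (eps i)) (malg_cast R (E j)))) /=.
  transitivity (\sum_(i < q) scal Hassoc He_l He_r (eps i) * \sum_(j < p) EB j : MR).
    by apply: eq_bigr => i _; rewrite mulr_sumr.
  by rewrite EB_sum; under eq_bigr do rewrite mulr1; rewrite -scal_sum Hes scal1.
Qed.

End Alg.

Theorem mainTheorem10
  (T : finType) (mul : T -> T -> T) (e : T)
  (Hassoc : associative mul) (He_l : left_id e mul) (He_r : right_id e mul)
  (HRtriv : R_trivial mul)
  (S : {set T}) (HS : generates mul e S)
  (p : nat) (sig : 'I_p -> T) (Hsig : representatives mul S sig)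
  (E : 'I_p -> {ffun T -> int}) (HE : algorithm_output mul e S sig E)
  (R : nzRingType) (q : nat) (eps : 'I_q -> R)
  (Heps : cspoi ( *%R ) (1 : R) eps) :
  cspoi (malg_mul mul) (@malg_one T e R)
    (fun ij : 'I_q * 'I_p =>
       malg_mul mul (malg_scal e (eps ij.1)) (malg_cast R (E ij.2))).
Proof.
case: HE => lt [lk [a [b [Hlt Hlk Ha Hb HEd]]]].
exact: (final Hassoc He_l He_r HRtriv HS Hsig Hlt Hlk Ha Hb HEd Heps).
Qed.
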